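(* Let $\mathbf x_1,\ldots,\mathbf x_n\in\mathbb{R}^d\setminus\{\mathbf 0\}$, with $x_{ij}$ the $j$-th coordinate of $\mathbf x_i$, and suppose the probit likelihood $\ell(\beta)=\prod_{i=1}^n\Phi(\mathbf x_i^T\beta)$ has a unique global maximizer on $\mathbb{R}^d$. Let $\pi(\beta)\propto\ell(\beta)$ be the posterior under a flat prior. For $j=1,\ldots,d$ let $$z_j(\beta)=-\frac12\sum_{i=1}^n\frac{x_{ij}\,\phi(\mathbf x_i^T\beta)}{\Phi(\mathbf x_i^T\beta)}.$$ Then for every $\delta>0$ and every $j$, $\mathbb{E}_\pi[|z_j|^{2+\delta}]<\infty$.
   Context: $\Phi$ and $\phi$ denote the standard normal c.d.f. and density. The $z_j$ are the control variates $-\frac12\partial_{\beta_j}\ln\pi$ of the zero-variance method with linear trial polynomial. *)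

(* Defs.v *)
From HB Require Import structures.
From mathcomp Require Import all_boot all_order all_algebra.
From mathcomp Require Import all_classical all_reals all_analysis.
Set Implicit Arguments. Unset Strict Implicit. Unset Printing Implicit Defensive.
Import Order.TTheory GRing.Theory Num.Theory.
Local Open Scope classical_set_scope.
Local Open Scope ring_scope.

Definition std_phi (R : realType) (t : R) : R := normal_pdf 0 1 t.
Definition std_Phi (R : realType) (t : R) : R :=
  fine (\int[@lebesgue_measure R]_(u in `]-oo, t]) (std_phi u)%:E)%E.

(* Lebesgue integral over R^d (points = d.-tuples), written as the iterated
   integral over the coordinates; for nonnegative measurable integrands this
   equals the integral w.r.t. d-dimensional Lebesgue measure (Tonelli). *)
Fixpoint iint_Rd (R : realType) (d : nat) : (d.-tuple R -> \bar R) -> \bar R :=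
  match d with
  | 0 => fun f => f [tuple]
  | d'.+1 => fun f =>
      (\int[@lebesgue_measure R]_(x in [set: R])
          iint_Rd (fun t : d'.-tuple R => f [tuple of x :: t]))%E
  end.

Definition dotR (R : realType) (d : nat) (x b : d.-tuple R) : R :=
  \sum_(j < d) tnth x j * tnth b j.

Definition probit_lik (R : realType) (n d : nat) (X : 'I_n -> d.-tuple R)
  (b : d.-tuple R) : R := \prod_(i < n) std_Phi (dotR (X i) b).

Definition zcv (R : realType) (n d : nat) (X : 'I_n -> d.-tuple R) (j : 'I_d)
  (b : d.-tuple R) : R :=
  - (1/2) * \sum_(i < n) tnth (X i) j * std_phi (dotR (X i) b)
                         / std_Phi (dotR (X i) b).

(* Main.v *)
Require Import Defs.
From HB Require Import structures.
From mathcomp Require Import all_boot all_order all_algebra.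
From mathcomp Require Import all_classical all_reals all_analysis.
From mathcomp Require Import ring lra measurable_realfun.
Set Implicit Arguments. Unset Strict Implicit. Unset Printing Implicit Defensive.
Import Order.TTheory GRing.Theory Num.Theory.
Import numFieldNormedType.Exports.
Local Open Scope classical_set_scope.
Local Open Scope ring_scope.
Local Notation leb := (@lebesgue_measure _).

Lemma cont_sum (R : realType) (T : topologicalType) (I : Type) (s : seq I)
  (f : I -> T -> R) : (forall i, continuous (f i)) ->
  continuous (fun x => \sum_(i <- s) f i x).
Proof.
move=> fc; elim: s => [|a s IH].
  by under eq_fun do rewrite big_nil; exact: cst_continuous.
under eq_fun do rewrite big_cons.
by move=> x; apply: cvgD; [exact: fc|exact: IH].
Qed.
Definition xu (R : realType) n d (X : 'I_n -> d.-tuple R) (i : 'I_n) (u : 'rV[R]_d) : R :=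
  \sum_(j < d) tnth (X i) j * u ord0 j.

Lemma xu_cont (R : realType) n d (X : 'I_n -> d.-tuple R) i : continuous (xu X i).
Proof.
suff H : continuous (fun u : 'rV[R]_d => \sum_(j < d) tnth (X i) j * u ord0 j) by exact: H.
apply: cont_sum => j u; apply: (@continuousM _ _ (fun=> tnth (X i) j) (fun x : 'rV[R]_d => x ord0 j)); first exact: cst_continuous.
exact: coord_continuous.
Qed.

Lemma xuZ (R : realType) n d (X : 'I_n -> d.-tuple R) i k u : xu X i (k *: u) = k * xu X i u.
Proof.
rewrite /xu mulr_sumr; apply: eq_bigr => j _; rewrite mxE; ring.
Qed.

Lemma unif_sep (R : realType) n d (X : 'I_n -> d.-tuple R) : (0 < d)%N ->
  (forall u : 'rV[R]_d, u != 0 -> exists i, xu X i u < 0) ->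
  exists2 c : R, 0 < c & forall u : 'rV[R]_d, exists i, xu X i u <= - c * `|u|.
Proof.
move=> d0 Hsep.
pose S := [set u : 'rV[R]_d | `|u| = 1].
pose f u := \sum_(i < n) (`|xu X i u| - xu X i u).
have fc : continuous f.
  apply: cont_sum => i u.
  apply: (continuousB (f := fun u => `|xu X i u|) (g := xu X i)); last exact: xu_cont.
  apply: continuous_comp; first exact: xu_cont.
  exact: norm_continuous.
have Sn : S !=set0.
  pose v : 'rV[R]_d := const_mx 1.
  have v0 : v != 0.
    apply/eqP => /matrixP /(_ ord0 (Ordinal d0)); rewrite !mxE => /eqP.
    by rewrite oner_eq0.
  exists (`|v|^-1 *: v); rewrite /S /= normrZ normfV normr_id mulVf //.
  by rewrite normr_eq0.
have Sc : compact S.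
  apply: bounded_closed_compact.
    exists 1; split => // M M1 x; rewrite /S /= => ->; exact: ltW.
  have -> : S = (fun u : 'rV[R]_d => `|u|) @^-1` [set 1] by [].
  apply: preimage_closed; last exact: closed_eq.
  by move=> u _; exact: norm_continuous.
have [c0 c0S c0min] := EVT_min_rV Sn Sc (continuous_subspaceT fc).
have Hc0 : c0 != 0.
  by apply/eqP => c00; move: c0S; rewrite inE /S /= c00 normr0 => /eqP; rewrite eq_sym oner_eq0.
have [i0 Hi0] := Hsep _ Hc0.
have n0 : (0 < n)%N := leq_ltn_trans (leq0n _) (ltn_ord i0).
have tge0 i u : 0 <= `|xu X i u| - xu X i u by rewrite subr_ge0 ler_norm.
have m0 : 0 < f c0.
  rewrite /f (bigD1 i0) //= ltr_pwDl //; last by apply: sumr_ge0 => i _; exact: tge0.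
  by rewrite ltr0_norm //; lra.
exists (f c0 / (2 * n%:R)).
  by rewrite divr_gt0 // mulr_gt0 // ltr0n.
move=> u; have [->|u0] := eqVneq u 0.
  by exists i0; rewrite /xu big1 ?normr0 ?mulr0 // => j _; rewrite mxE mulr0.
pose v := `|u|^-1 *: u.
have vS : v \in S.
  by rewrite inE /S /= /v normrZ normfV normr_id mulVf // normr_eq0.
have fv := c0min _ vS.
pose g i := `|xu X i v| - xu X i v.
have [i1 _ Hi1] : exists2 i, true & forall j, g j <= g i.
  case: (@Order.TotalTheory.arg_maxP _ _ 'I_n i0 xpredT g isT) => i _ H.
  by exists i => // j; exact: H.
have : f c0 <= n%:R * g i1.
  apply: (le_trans fv).
  have -> : n%:R * g i1 = \sum_(i < n) g i1 by rewrite sumr_const card_ord mulr_natl.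
  by apply: ler_sum => j _; exact: Hi1.
have unz : 0 < `|u| by rewrite normr_gt0.
exists i1.
have -> : xu X i1 u = `|u| * xu X i1 v.
  by rewrite /v xuZ mulrA mulfV ?mul1r // gt_eqF.
rewrite /g in H.
have [xpos|xneg] := leP 0 (xu X i1 v).
  have: f c0 <= 0 by move: H; rewrite ger0_norm // subrr mulr0.
  by rewrite leNgt m0.
rewrite ltr0_norm // in H.
have H2 : f c0 / (2 * n%:R) <= - xu X i1 v.
  rewrite ler_pdivrMr ?mulr_gt0 ?ltr0n //; nra.
nra.
Qed.

Lemma phiE (R : realType) (u : R) : std_phi u = normal_peak 1 * expR (- u ^+ 2 / 2).
Proof.
by rewrite /std_phi /normal_pdf oner_eq0 /normal_fun subr0 expr1n.
Qed.

Lemma peak1_gt0 (R : realType) : 0 < normal_peak (1 : R).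
Proof. by apply: normal_peak_gt0; rewrite oner_eq0. Qed.

Lemma phi_gt0 (R : realType) (u : R) : 0 < std_phi u.
Proof. by rewrite phiE mulr_gt0 ?expR_gt0 ?peak1_gt0. Qed.

Lemma mphi (R : realType) (D : set R) : measurable_fun D (fun u => (std_phi u)%:E).
Proof.
apply: (measurable_funS _ (subsetT D)) => //.
by apply/measurable_EFinP; exact: measurable_normal_pdf.
Qed.

Definition Iphi (R : realType) (t : R) :=
  (\int[leb]_(u in `]-oo, t]) (std_phi u)%:E)%E.

Lemma Iphi_ge0 (R : realType) (t : R) : (0 <= Iphi t)%E.
Proof. by apply: integral_ge0 => u _; rewrite lee_fin ltW ?phi_gt0. Qed.

Lemma Iphi_le1 (R : realType) (t : R) : (Iphi t <= 1)%E.
Proof.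
rewrite -(integral_normal_pdf 0 1); apply: ge0_subset_integral => //.
- exact: mphi.
- by move=> u _; rewrite lee_fin ltW ?phi_gt0.
Qed.

Lemma Iphi_mono (R : realType) (s t : R) : s <= t -> (Iphi s <= Iphi t)%E.
Proof.
move=> st; apply: ge0_subset_integral => //.
- exact: mphi.
- by move=> u _; rewrite lee_fin ltW ?phi_gt0.
- by move=> u /=; rewrite !in_itv /= => us; apply: le_trans st.
Qed.

Lemma Iphi_low (R : realType) (t : R) :
  ((expR (- (3/2)) * std_phi t / (1 + `|t|))%:E <= Iphi t)%E.
Proof.
set h := (1 + `|t|)^-1.
have h0 : 0 < h by rewrite invr_gt0; apply: ltr_pwDl.
have hh : h * (1 + `|t|) = 1 by rewrite mulVf // gt_eqF // ltr_pwDl.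
set m := expR (- (3/2)) * std_phi t.
rewrite -/h -/m.
apply: (@le_trans _ _ (\int[leb]_(u in `[(t - h)%R, t]) (std_phi u)%:E)%E); last first.
  apply: ge0_subset_integral => //.
  - exact: mphi.
  - by move=> u _; rewrite lee_fin ltW ?phi_gt0.
  - by move=> u /=; rewrite !in_itv /= => /andP[].
apply: (@le_trans _ _ (\int[leb]_(u in `[(t - h)%R, t]) (cst m%:E u))%E).
  rewrite integral_cst //= lebesgue_measure_itv /= lte_fin.
  rewrite ltrBlDr ltrDl h0 -EFinD EFinM; apply: lee_pmul => //.
    by rewrite lee_fin mulr_ge0 ?expR_ge0 ?ltW ?phi_gt0.
    by rewrite lee_fin ltW.
  by rewrite lee_fin; rewrite opprB addrCA subrr addr0.
apply: ge0_le_integral => //.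
- by move=> u _; rewrite lee_fin mulr_ge0 ?expR_ge0 ?ltW ?phi_gt0.
- exact: mphi.
move=> u /=; rewrite in_itv /= => /andP[u1 u2]; rewrite lee_fin /m !phiE.
rewrite mulrCA ler_pM2l ?peak1_gt0 // -expRD ler_expR.
have nt := normr_ge0 t.
have ta : `|t| * h <= 1 by nra.
have hle : h <= 1 by nra.
have : u ^+ 2 <= t ^+ 2 + 3.
  have [u0|u0] := leP 0 u.
    have : 0 <= t by lra.
    by move=> t0; nra.
  have tt : `|t| ^+ 2 = t ^+ 2 by rewrite real_normK ?num_real.
  have nu : - u <= `|t| + h.
    by have := ler_norm (- t); rewrite normrN; lra.
  have : (- u) ^+ 2 <= (`|t| + h) ^+ 2.
    by rewrite ler_sqr ?nnegrE; lra.
  rewrite sqrrN; nra.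
lra.
Qed.

Lemma pdfE (R : realType) (s u : R) : s != 0 ->
  normal_pdf 0 s u = normal_peak s * expR (- u ^+ 2 / (s ^+ 2 *+ 2)).
Proof. by move=> s0; rewrite /normal_pdf (negbTE s0) /normal_fun subr0. Qed.

Definition Cup (R : realType) : R := normal_peak 1 / normal_peak 2.

Lemma Cup_gt0 (R : realType) : 0 < Cup R.
Proof.
by rewrite /Cup divr_gt0 ?peak1_gt0 // normal_peak_gt0 // pnatr_eq0.
Qed.

Lemma Iphi_up (R : realType) (t : R) : t <= 0 ->
  (Iphi t <= (Cup R * expR (- (3/8) * t ^+ 2))%:E)%E.
Proof.
move=> t0; set e := expR (- (3/8) * t ^+ 2).
have p2 : (2 : R) != 0 by rewrite pnatr_eq0.
have P2 : 0 < normal_peak (2 : R) by rewrite normal_peak_gt0.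
have mf2 (D : set R) : measurable_fun D (fun u => (Cup R * e * normal_pdf 0 2 u)%:E).
  apply: (measurable_funS _ (subsetT D)) => //.
  apply/measurable_EFinP; apply: measurable_funM => //.
  exact: measurable_normal_pdf.
have f20 u : (0 <= (Cup R * e * normal_pdf 0 2 u)%:E)%E.
  by rewrite lee_fin mulr_ge0 ?normal_pdf_ge0 // mulr_ge0 ?expR_ge0 // ltW ?Cup_gt0.
apply: (@le_trans _ _ (\int[leb]_(u in `]-oo, t]) (Cup R * e * normal_pdf 0 2 u)%:E)%E).
  apply: ge0_le_integral => //.
  - by move=> u _; rewrite lee_fin ltW ?phi_gt0.
  - exact: mphi.
  - exact: mf2.
  move=> u /=; rewrite in_itv /= => ut; rewrite lee_fin phiE pdfE //.
  rewrite /Cup /e.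
  have -> : normal_peak 1 / normal_peak 2 * expR (- (3 / 8) * t ^+ 2) *
    (normal_peak 2 * expR (- u ^+ 2 / (2 ^+ 2 *+ 2))) =
    normal_peak 1 * (expR (- (3 / 8) * t ^+ 2) * expR (- u ^+ 2 / (2 ^+ 2 *+ 2))).
    by field; rewrite gt_eqF.
  rewrite ler_pM2l ?peak1_gt0 // -expRD ler_expR.
  have : t ^+ 2 <= u ^+ 2 by nra.
  rewrite (_ : (2 : R) ^+ 2 *+ 2 = 8); last by rewrite -mulr_natr; ring.
  lra.
apply: (@le_trans _ _ (\int[leb]_(u in setT) (Cup R * e * normal_pdf 0 2 u)%:E)%E).
  apply: ge0_subset_integral => // *; first exact: mf2; by move=> u _; exact: f20.
under eq_integral do rewrite EFinM.
rewrite ge0_integralZl //.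
- by rewrite integral_normal_pdf mule1.
- by apply/measurable_EFinP; exact: measurable_normal_pdf.
- by move=> u _; rewrite lee_fin normal_pdf_ge0.
- by rewrite lee_fin mulr_ge0 ?expR_ge0 // ltW ?Cup_gt0.
Qed.

Lemma PhiE (R : realType) (t : R) : (std_Phi t)%:E = Iphi t.
Proof.
rewrite /std_Phi -/(Iphi t) fineK //; rewrite ge0_fin_numE ?Iphi_ge0 //.
exact: le_lt_trans (Iphi_le1 t) (ltry 1).
Qed.

Lemma Phi_ge0 (R : realType) (t : R) : 0 <= std_Phi t.
Proof. by rewrite -lee_fin PhiE Iphi_ge0. Qed.

Lemma Phi_le1 (R : realType) (t : R) : std_Phi t <= 1.
Proof. by rewrite -lee_fin PhiE Iphi_le1. Qed.

Lemma Phi_mono (R : realType) (s t : R) : s <= t -> std_Phi s <= std_Phi t.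
Proof. by move=> st; rewrite -lee_fin !PhiE Iphi_mono. Qed.

Lemma Phi_low (R : realType) (t : R) :
  expR (- (3/2)) * std_phi t / (1 + `|t|) <= std_Phi t.
Proof. by rewrite -lee_fin PhiE Iphi_low. Qed.

Lemma Phi_gt0 (R : realType) (t : R) : 0 < std_Phi t.
Proof.
apply: lt_le_trans (Phi_low t).
by rewrite divr_gt0 ?mulr_gt0 ?expR_gt0 ?phi_gt0 // ltr_pwDl.
Qed.

Lemma Phi_up (R : realType) (t : R) : t <= 0 ->
  std_Phi t <= Cup R * expR (- (3/8) * t ^+ 2).
Proof. by move=> t0; rewrite -lee_fin PhiE Iphi_up. Qed.

Lemma ratio_bound (R : realType) (t : R) :
  std_phi t / std_Phi t <= expR (3/2) * (1 + `|t|).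
Proof.
have P := Phi_gt0 t; have L := Phi_low t.
have n1 : 0 < 1 + `|t| by rewrite ltr_pwDl.
rewrite ler_pdivrMr //.
have E : expR (3/2) * expR (- (3/2)) = 1 :> R by rewrite -expRD addrN expR0.
have : std_phi t <= expR (3/2) * (1 + `|t|) * (expR (- (3/2)) * std_phi t / (1 + `|t|)).
  rewrite (_ : expR (3/2) * (1 + `|t|) * (expR (- (3/2)) * std_phi t / (1 + `|t|)) = (expR (3/2) * expR (- (3/2))) * std_phi t * ((1 + `|t|) / (1 + `|t|))); last by rewrite mulrC; field; rewrite gt_eqF.
  by rewrite E mul1r divff ?mulr1 // gt_eqF.
move=> H; apply: (le_trans H); rewrite ler_pM2l // mulr_gt0 // expR_gt0.
Qed.

Lemma le_integral_nm (R : realType) (f g : R -> \bar R) :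
  (forall x, (0 <= f x)%E) -> (forall x, (f x <= g x)%E) ->
  (\int[leb]_x f x <= \int[leb]_x g x)%E.
Proof.
move=> f0 fg.
have g0 x : (0 <= g x)%E by apply: le_trans (fg x).
rewrite !ge0_integralTE //.
apply: le_ereal_sup => _ [h hf <-]; exists h => //= x.
exact: le_trans (hf x) (fg x).
Qed.

Lemma iint_ge0 (R : realType) d (f : d.-tuple R -> \bar R) :
  (forall b, (0 <= f b)%E) -> (0 <= iint_Rd f)%E.
Proof.
elim: d f => [|d IH] f f0 /=; first exact: f0.
by apply: integral_ge0 => x _; apply: IH.
Qed.

Lemma iint_le (R : realType) d (f g : d.-tuple R -> \bar R) :
  (forall b, (0 <= f b)%E) -> (forall b, (f b <= g b)%E) -> (iint_Rd f <= iint_Rd g)%E.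
Proof.
elim: d f g => [|d IH] f g f0 fg /=; first exact: fg.
apply: le_integral_nm => x; first by apply: iint_ge0.
by apply: IH.
Qed.

Lemma iint_gauss (R : realType) d (s K : R) : s != 0 -> 0 <= K ->
  iint_Rd (fun b : d.-tuple R => (K * \prod_(k < d) normal_pdf 0 s (tnth b k))%:E) = K%:E.
Proof.
move=> s0; elim: d K => [|d IH] K K0 /=; first by rewrite big_ord0 mulr1.
have -> : (fun x : R => iint_Rd (fun t : d.-tuple R =>
     (K * \prod_(k < d.+1) normal_pdf 0 s (tnth [tuple of x :: t] k))%:E)) =
   (fun x => (K * normal_pdf 0 s x)%:E).
  apply: funext => x; rewrite -IH ?mulr_ge0 ?normal_pdf_ge0 //; congr iint_Rd.
  apply: funext => t; rewrite big_ord_recl tnth0 mulrA; congr (_ * _)%:E.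
  by apply: eq_bigr => k _; rewrite tnthS.
under eq_integral do rewrite EFinM.
rewrite ge0_integralZl //.
- by rewrite integral_normal_pdf mule1.
- by apply/measurable_EFinP; exact: measurable_normal_pdf.
- by move=> u _; rewrite lee_fin normal_pdf_ge0.
Qed.

Definition rv (R : realType) d (b : d.-tuple R) : 'rV[R]_d := \row_j tnth b j.

Lemma xu_rv (R : realType) n d (X : 'I_n -> d.-tuple R) i b :
  xu X i (rv b) = dotR (X i) b.
Proof. by rewrite /xu /dotR; apply: eq_bigr => j _; rewrite mxE. Qed.

Lemma tnth_le_rv (R : realType) d (b : d.-tuple R) k : `|tnth b k| <= `|rv b|.
Proof.
have -> : `|rv b| = mx_norm (rv b) by [].
rewrite mx_normrE; apply: le_trans (le_bigmax _ _ (ord0, k)); rewrite /= mxE.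
by [].
Qed.

Lemma lik_mono (R : realType) n d (X : 'I_n -> d.-tuple R) b b' :
  (forall i, dotR (X i) b <= dotR (X i) b') -> probit_lik X b <= probit_lik X b'.
Proof.
move=> H; apply: ler_prod => i _; rewrite Phi_ge0 /=; exact: Phi_mono.
Qed.

Lemma sep_of_unique (R : realType) n d (X : 'I_n -> d.-tuple R) :
  (exists! b : d.-tuple R, forall b' : d.-tuple R, probit_lik X b' <= probit_lik X b) ->
  forall u : 'rV[R]_d, u != 0 -> exists i, xu X i u < 0.
Proof.
move=> [b [Hb Hu]] u u0.
case: (pselect (exists i, xu X i u < 0)) => // Hn; exfalso.
have H0 i : 0 <= xu X i u.
  by rewrite leNgt; apply/negP => H; apply: Hn; exists i.
pose b' := [tuple tnth b j + u ord0 j | j < d].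
have db i : dotR (X i) b' = dotR (X i) b + xu X i u.
  rewrite /dotR /xu -big_split /=; apply: eq_bigr => j _.
  by rewrite tnth_mktuple mulrDr.
have : b' = b.
  apply/esym; apply: Hu => b''; apply: le_trans (Hb b'') _.
  by apply: lik_mono => i; rewrite db lerDl.
move=> /(congr1 (fun t => tnth t)) E.
move/eqP: u0; apply; apply/matrixP => i j; rewrite (ord1 i) mxE.
have := congr1 (fun f => f j) E; rewrite /= tnth_mktuple => /eqP.
by rewrite -subr_eq0 addrC addKr => /eqP.
Qed.

Lemma lik_bound (R : realType) n d (X : 'I_n -> d.-tuple R) (c : R) : 0 < c ->
  (forall u : 'rV[R]_d, exists i, xu X i u <= - c * `|u|) ->
  forall b, probit_lik X b <= Cup R * expR (- (3/8) * (c ^+ 2 * `|rv b| ^+ 2)).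
Proof.
move=> c0 H b; have [i Hi] := H (rv b); rewrite xu_rv in Hi.
set t := dotR (X i) b in Hi *; set s := `|rv b| in Hi *.
have s0 : 0 <= s by rewrite normr_ge0.
have t0 : t <= 0 by nra.
apply: (@le_trans _ _ (std_Phi t)).
  rewrite /probit_lik (bigD1 i) //= ler_piMr ?Phi_ge0 //.
  by apply: prodr_ile1 => k _; rewrite Phi_ge0 Phi_le1.
apply: (le_trans (Phi_up t0)); rewrite ler_pM2l ?Cup_gt0 // ler_expR.
have : c ^+ 2 * s ^+ 2 <= t ^+ 2.
  have cs : 0 <= c * s by rewrite mulr_ge0 // ltW.
  have h : c * s <= - t by lra.
  rewrite !expr2; nra.
lra.
Qed.

Definition Az (R : realType) n d (X : 'I_n -> d.-tuple R) (j : 'I_d) : R :=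
  expR (3/2) * \sum_(i < n) `|tnth (X i) j| * (1 + \sum_(k < d) `|tnth (X i) k|).

Lemma Az_ge0 (R : realType) n d (X : 'I_n -> d.-tuple R) j : 0 <= Az X j.
Proof.
rewrite /Az mulr_ge0 ?expR_ge0 // sumr_ge0 // => i _.
by rewrite mulr_ge0 // addr_ge0 // sumr_ge0.
Qed.

Lemma z_bound (R : realType) n d (X : 'I_n -> d.-tuple R) j b :
  `|zcv X j b| <= Az X j * (1 + `|rv b|).
Proof.
set s := `|rv b|; have s0 : 0 <= s by rewrite normr_ge0.
rewrite /zcv normrM.
apply: (@le_trans _ _ (`|\sum_(i < n) tnth (X i) j * std_phi (dotR (X i) b) / std_Phi (dotR (X i) b)|)).
  apply: ler_piMl; first exact: normr_ge0.
  by rewrite normrN ger0_norm; lra.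
apply: (le_trans (ler_norm_sum _ _ _)).
rewrite /Az -[in X in _ <= X]mulrA mulr_suml mulr_sumr; apply: ler_sum => i _.
set t := dotR (X i) b; set a := \sum_(k < d) `|tnth (X i) k|.
have a0 : 0 <= a by rewrite sumr_ge0.
have ta : `|t| <= a * s.
  rewrite /t /dotR /a mulr_suml; apply: (le_trans (ler_norm_sum _ _ _)).
  apply: ler_sum => k _; rewrite normrM ler_wpM2l //; exact: tnth_le_rv.
have r0 : 0 <= std_phi t / std_Phi t by rewrite divr_ge0 ?ltW ?phi_gt0 ?Phi_gt0.
rewrite -mulrA normrM (ger0_norm r0) (mulrC (expR _)) -!mulrA ler_wpM2l //.
apply: (le_trans (ratio_bound t)); rewrite mulrA mulrC ler_wpM2l ?expR_ge0 //.
nra.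
Qed.

Lemma pow_bound (R : realType) (x A s p eta : R) : 0 <= x -> 0 <= A -> 0 <= s ->
  0 <= p -> 0 < eta -> x <= A * (1 + s) ->
  x `^ p <= A `^ p * expR (p ^+ 2 / (4 * eta)) * expR (eta * s ^+ 2).
Proof.
move=> x0 A0 s0 p0 e0 xA.
apply: (@le_trans _ _ ((A * (1 + s)) `^ p)).
  by apply: ge0_ler_powR => //; rewrite nnegrE // mulr_ge0 // addr_ge0.
rewrite powRM ?addr_ge0 // -mulrA ler_wpM2l ?powR_ge0 // -expRD.
rewrite /powR gt_eqF ?ltr_pwDl // ler_expR.
apply: (@le_trans _ _ (p * s)).
  rewrite ler_wpM2l //; apply: le_ln1Dx; lra.
pose w := p / (2 * eta).
have pw : p = 2 * eta * w by rewrite /w mulrCA divff ?mulr1 // gt_eqF // mulr_gt0.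
have -> : p ^+ 2 / (4 * eta) = eta * w ^+ 2.
  by rewrite pw; field; rewrite gt_eqF.
have h := mulr_ge0 (ltW e0) (sqr_ge0 (s - w)).
rewrite pw; nra.
Qed.

Lemma gauss_prod (R : realType) d (b : d.-tuple R) (a sg : R) : (0 < d)%N -> 0 < a ->
  0 < sg -> sg ^+ 2 *+ 2 = d%:R / a ->
  expR (- a * `|rv b| ^+ 2) <=
    (normal_peak sg) ^- d * \prod_(k < d) normal_pdf 0 sg (tnth b k).
Proof.
move=> d0 a0 sg0 sg2.
have dR : 0 < d%:R :> R by rewrite ltr0n.
have pk : 0 < normal_peak sg by rewrite normal_peak_gt0 // gt_eqF.
under eq_bigr do rewrite pdfE ?gt_eqF //.
rewrite big_split /= prodr_const card_ord mulKf; last first.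
  by rewrite expf_eq0 gt_eqF // andbF.
rewrite -expR_sum ler_expR sg2.
set s := `|rv b|.
have H : \sum_(k < d) tnth b k ^+ 2 <= d%:R * s ^+ 2.
  have -> : d%:R * s ^+ 2 = \sum_(k < d) s ^+ 2 by rewrite sumr_const card_ord mulr_natl.
  apply: ler_sum => k _; rewrite -real_normK ?num_real //.
  by rewrite ler_pXn2r ?nnegrE ?normr_ge0 //; apply: tnth_le_rv.
have -> : \sum_(k < d) - tnth b k ^+ 2 / (d%:R / a) =
    - (a / d%:R) * \sum_(k < d) tnth b k ^+ 2.
  by rewrite mulr_sumr; apply: eq_bigr => k _; field; rewrite !gt_eqF.
have ad : 0 <= a / d%:R by rewrite divr_ge0 ?ltW.
have := ler_wpM2l ad H.
have -> : a / d%:R * (d%:R * s ^+ 2) = a * s ^+ 2 by field; rewrite !gt_eqF.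
lra.
Qed.

Lemma sg_ex (R : realType) d (a : R) : (0 < d)%N -> 0 < a ->
  exists2 sg : R, 0 < sg & sg ^+ 2 *+ 2 = d%:R / a.
Proof.
move=> d0 a0; have dR : 0 < d%:R :> R by rewrite ltr0n.
exists (Num.sqrt (d%:R / (2 * a))); first by rewrite sqrtr_gt0 divr_gt0 // mulr_gt0.
rewrite sqr_sqrtr ?divr_ge0 ?ltW ?mulr_gt0 //; field.
by rewrite gt_eqF.
Qed.

Theorem mainTheorem6 (R : realType) (n d : nat) (X : 'I_n -> d.-tuple R) :
  (forall i : 'I_n, exists j : 'I_d, tnth (X i) j != 0) ->
  (exists! b : d.-tuple R, forall b' : d.-tuple R, probit_lik X b' <= probit_lik X b) ->
  (* the flat-prior posterior pi is proper (normalising constant finite) *)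
  (iint_Rd (fun b => (probit_lik X b)%:E) < +oo)%E /\
  (* E_pi[|z_j|^(2+delta)] < oo, i.e. int |z_j|^(2+delta) * l < oo *)
  (forall (delta : R), 0 < delta -> forall j : 'I_d,
     (iint_Rd (fun b => (`|zcv X j b| `^ (2 + delta) * probit_lik X b)%:E) < +oo)%E).
Proof.
move=> _ Huniq.
case: d X Huniq => [|d] X Huniq.
  by split; [rewrite /= ltry | move=> ? ? []].
have d0 : (0 < d.+1)%N by [].
have [c c0 Hc] := unif_sep d0 (sep_of_unique Huniq).
have lik0 b : 0 <= probit_lik X b by apply: prodr_ge0 => i _; exact: Phi_ge0.
have Cu0 : 0 <= Cup R by exact: ltW (Cup_gt0 R).
split.
  have a0 : 0 < 3 / 8 * c ^+ 2 by rewrite mulr_gt0 ?exprn_gt0 //.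
  have [sg sg0 sg2] := sg_ex d0 a0.
  have pk : 0 < normal_peak sg by rewrite normal_peak_gt0 // gt_eqF.
  have K0 : 0 <= Cup R * normal_peak sg ^- d.+1 by rewrite mulr_ge0 // invr_ge0 exprn_ge0 // ltW.
  apply: le_lt_trans (iint_le (g := fun b => ((Cup R * normal_peak sg ^- d.+1) *
      \prod_(k < d.+1) normal_pdf 0 sg (tnth b k))%:E) _ _) _.
  - by move=> b; rewrite lee_fin.
  - move=> b; rewrite lee_fin; apply: (le_trans (lik_bound c0 Hc b)).
    rewrite -mulrA ler_wpM2l //.
    have -> : - (3 / 8) * (c ^+ 2 * `|rv b| ^+ 2) = - (3 / 8 * c ^+ 2) * `|rv b| ^+ 2 by ring.
    exact: gauss_prod.
  by rewrite iint_gauss ?gt_eqF // ltry.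
move=> delta dl j.
set p := 2 + delta.
have p0 : 0 <= p by rewrite /p; lra.
have e0 : 0 < 3 / 16 * c ^+ 2 by rewrite mulr_gt0 ?exprn_gt0 //.
have [sg sg0 sg2] := sg_ex d0 e0.
have pk : 0 < normal_peak sg by rewrite normal_peak_gt0 // gt_eqF.
set K := Az X j `^ p * expR (p ^+ 2 / (4 * (3 / 16 * c ^+ 2))) * Cup R.
have K0 : 0 <= K by rewrite /K; apply: mulr_ge0 => //; apply: mulr_ge0; [exact: powR_ge0 | exact: expR_ge0].
have K1 : 0 <= K * normal_peak sg ^- d.+1 by rewrite mulr_ge0 // invr_ge0 exprn_ge0 // ltW.
apply: le_lt_trans (iint_le (g := fun b => ((K * normal_peak sg ^- d.+1) *
    \prod_(k < d.+1) normal_pdf 0 sg (tnth b k))%:E) _ _) _.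
- by move=> b; rewrite lee_fin mulr_ge0 ?powR_ge0.
- move=> b; rewrite lee_fin.
  set s := `|rv b|.
  have s0 : 0 <= s by rewrite normr_ge0.
  have H1 := pow_bound (normr_ge0 _) (Az_ge0 X j) s0 p0 e0 (z_bound X j b).
  have H2 := lik_bound c0 Hc b.
  apply: (le_trans (ler_pM (powR_ge0 _ _) (lik0 b) H1 H2)).
  have -> : Az X j `^ p * expR (p ^+ 2 / (4 * (3 / 16 * c ^+ 2))) *
      expR (3 / 16 * c ^+ 2 * s ^+ 2) * (Cup R * expR (- (3 / 8) * (c ^+ 2 * s ^+ 2))) =
      K * expR (- (3 / 16 * c ^+ 2) * s ^+ 2).
    have Ee : expR (3 / 16 * c ^+ 2 * s ^+ 2) * expR (- (3 / 8) * (c ^+ 2 * s ^+ 2)) =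
        expR (- (3 / 16 * c ^+ 2) * s ^+ 2) by rewrite -expRD; congr expR; field.
    by rewrite -Ee /K; ring.
  rewrite -[in E in _ <= E]mulrA ler_wpM2l //; exact: gauss_prod.
by rewrite iint_gauss ?gt_eqF // ltry.
Qed.
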